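(* Let $k\ge2$ and let $(a(n))_{n\ge0}$ and $(b(n))_{n\ge0}$ be $k$-automatic sequences. Then the sequence $(c(n))_{n\ge0}$ defined by $c(n)=1$ if $a(nk^\lambda+s)=b(nk^\lambda+s)$ for all integers $\lambda\ge0$ and $0\le s<k^\lambda$, and $c(n)=0$ otherwise, is $k$-automatic.
   Context: A sequence $u$ on a finite alphabet is $k$-automatic if there is a finite set of states $Q$, a map $\delta:Q\times\{0,\dots,k-1\}\to Q$ extended to words letter by letter, an initial state $q_0$ and an output map $\tau$ such that $u(n)=\tau(\delta(q_0,(n)_k))$ for all $n\ge0$, where $(n)_k$ is the base-$k$ expansion of $n$ (most significant digit first; $(0)_k$ is the empty word). *)

(* Defs.v *)
From mathcomp Require Import all_boot.
Set Implicit Arguments. Unset Strict Implicit. Unset Printing Implicit Defensive.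

(* Base-k expansion of n, least significant digit first; empty for n = 0.
   Fuel n suffices since digits strictly decrease n (k >= 2). *)
Fixpoint base_rev_aux (k fuel n : nat) : seq nat :=
  match fuel with
  | 0 => [::]
  | fuel'.+1 => if n == 0 then [::] else (n %% k) :: base_rev_aux k fuel' (n %/ k)
  end.

Definition base_expansion (k n : nat) : seq nat := rev (base_rev_aux k n n).

(* Digits fed to delta are always < k, so delta : Q -> nat -> Q is only
   relevant on {0,...,k-1}; this is equivalent to delta : Q * {0..k-1} -> Q. *)
Definition automatic (k : nat) (A : Type) (u : nat -> A) : Prop :=
  exists (Q : finType) (delta : Q -> nat -> Q) (q0 : Q) (tau : Q -> A),
    forall n : nat,
      u n = tau (foldl (fun q (d : nat) => delta q d) q0 (base_expansion k n)).

(* Main.v *)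
Require Import Defs.
From mathcomp Require Import all_boot.
From Stdlib Require Import ClassicalEpsilon.

Section Aux.
Variable k : nat.
Hypothesis hk : 2 <= k.

Lemma bra_indep f1 : forall f2 n, n <= f1 -> n <= f2 ->
  base_rev_aux k f1 n = base_rev_aux k f2 n.
Proof.
elim: f1 => [|f1 IH] f2 n h1 h2.
  have -> : n = 0 by apply/eqP; rewrite -leqn0.
  by case: f2 {h2}.
case: (posnP n) => [->|np]; first by case: f2 {h2}.
case: f2 h2 => [|f2] h2; first by rewrite leqn0 in h2; move/eqP: h2 np => ->.
rewrite /= (negbTE (lt0n_neq0 np)); congr (_ :: _); apply: IH.
  by rewrite -ltnS; apply: leq_trans h1; apply: ltn_Pdiv.
by rewrite -ltnS; apply: leq_trans h2; apply: ltn_Pdiv.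
Qed.

Definition br n := base_rev_aux k n n.

Lemma br_step m : 0 < m -> br m = m %% k :: br (m %/ k).
Proof.
move=> mp; rewrite /br; case: m mp => [//|m] _ /=.
congr (_ :: _); apply: bra_indep => //.
by rewrite -ltnS; apply: ltn_Pdiv.
Qed.

Lemma br0 : br 0 = [::].
Proof. by []. Qed.

Lemma br_nil n : br n = [::] -> n = 0.
Proof. by case: (posnP n) => // np; rewrite br_step. Qed.

Fixpoint rdig (l s : nat) : seq nat :=
  if l is l'.+1 then s %% k :: rdig l' (s %/ k) else [::].

Lemma br_shift n l : 0 < n -> forall s, s < k ^ l ->
  br (n * k ^ l + s) = rdig l s ++ br n.
Proof.
move=> np; elim: l => [|l IH] s hs.
  by rewrite expn0 ltnS leqn0 in hs; move/eqP: hs => ->; rewrite expn0 muln1 addn0.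
have k0 : 0 < k by apply: leq_trans hk.
rewrite br_step; last first.
  by rewrite ltn_addr // muln_gt0 np expn_gt0 k0.
rewrite expnSr mulnA modnMDl divnMDl //= IH //.
by rewrite ltn_divLR // -expnSr.
Qed.

End Aux.

Theorem lemma4p2 (k : nat) (A : eqType) (a b : nat -> A) (c : nat -> nat) :
  2 <= k -> automatic k a -> automatic k b ->
  (forall n : nat,
     c n = 1 <-> (forall lam s : nat, s < k ^ lam ->
                    a (n * k ^ lam + s) = b (n * k ^ lam + s))) ->
  (forall n : nat, c n = 0 \/ c n = 1) ->
  automatic k c.
Proof.
move=> hk [Qa [da [qa [ta Ha]]]] [Qb [db [qb [tb Hb]]]] Hc H01.
pose Q := option (Qa * Qb)%type.
pose delta (q : Q) (d : nat) : Q :=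
  match q with
  | None => Some (da qa d, db qb d)
  | Some (x, y) => Some (da x d, db y d)
  end.
pose st n := foldl delta None (base_expansion k n).
have stE : forall w, w <> [::] ->
    foldl delta None w = Some (foldl da qa w, foldl db qb w).
  case=> [//|d w] _ /=; elim: w (da qa d) (db qb d) => [//|e w IH] x y /=.
  exact: IH.
have beE : forall n, base_expansion k n = rev (br k n) by [].
have stNone : forall n, st n = None -> n = 0.
  move=> n; rewrite /st; case E: (base_expansion k n) => [|d w].
    by move=> _; apply: (@br_nil k hk); rewrite -[br k n]revK -beE E.
  by rewrite stE.
have keyA : forall n l s, 0 < n -> s < k ^ l ->
   a (n * k ^ l + s) = ta (foldl da (foldl da qa (base_expansion k n)) (rev (rdig k l s))).
  move=> n l s np hs; rewrite Ha beE br_shift // rev_cat foldl_cat //.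
have keyB : forall n l s, 0 < n -> s < k ^ l ->
   b (n * k ^ l + s) = tb (foldl db (foldl db qb (base_expansion k n)) (rev (rdig k l s))).
  move=> n l s np hs; rewrite Hb beE br_shift // rev_cat foldl_cat //.
have inv : forall n n', st n = st n' -> c n = 1 -> c n' = 1.
  move=> n n' E c1.
  case: (posnP n') => [n'0|n'p].
    subst n'; have E0 : n = 0 by apply: stNone; by rewrite E.
    by rewrite E0 in c1.
  case: (posnP n) => [n0|np].
    subst n; have h := stNone _ (esym E); by rewrite h in n'p.
  have ne : forall m, 0 < m -> base_expansion k m <> [::].
    move=> m mp; rewrite beE br_step // rev_cons; by case: (rev _).
  move: E; rewrite /st (stE _ (ne _ np)) (stE _ (ne _ n'p)) => -[EA EB].
  apply/Hc => l s hs; rewrite keyA // keyB // -EA -EB -keyA // -keyB //.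
  by move/Hc: c1; apply.
pose tau (q : Q) : nat :=
  if excluded_middle_informative (exists n, st n = q /\ c n = 1) then 1 else 0.
exists (option (Qa * Qb)%type), delta, None, tau => n.
rewrite /tau; case: excluded_middle_informative => [[n' [E c1]]|nE].
  by apply: (inv n'). 
case: (H01 n) => // c1; case: nE; by exists n.
Qed.
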